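(* Let $r\ge1$, let $\mu=\langle\mu_1,\dots,\mu_{r+1}\rangle\in\mathbb{Z}^{r+1}$ with $\sum_i\mu_i=0$, and let $\Lambda\subseteq\Phi^+_{A_r}$. Let $\mathcal{T}=\Gamma(\Lambda)=\{T_{i,j}:\varepsilon_i-\varepsilon_{i+j}\in\Lambda\}$. Then $P_\Lambda(\mu)$ is in bijection with $\mathrm{JS}_{\mathcal{T}}(\langle\mu_1,\dots,\mu_r\rangle,\langle\mu_1+\cdots+\mu_r\rangle,r)$ (via juggling sequence $\mapsto$ multiset of roots $\varepsilon_i-\varepsilon_{i+j}$, one per throw at time $i$ to height $j$), and \[K_\Lambda(\mu)=\mathsf{js}_{\mathcal{T}}(\langle\mu_1,\dots,\mu_r\rangle,\langle\mu_1+\cdots+\mu_r\rangle,r).\]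
   Context: A juggling state is a finitely supported integer vector $\mathbf{s}=\langle s_1,s_2,\dots\rangle$ indexed by heights (trailing zeros omitted; negative entries are magic balls). A juggling sequence of length $n$ from $\mathbf{a}$ to $\mathbf{b}$ is a sequence $(\mathbf{s}_0,\dots,\mathbf{s}_n)$ with $\mathbf{s}_0=\mathbf{a}$, $\mathbf{s}_n=\mathbf{b}$, such that for each $1\le i\le n$ there are nonnegative integers $c^{(i)}_k$ (finitely many nonzero) with $\sum_k c^{(i)}_k=(\mathbf{s}_{i-1})_1$ and $(\mathbf{s}_i)_k=(\mathbf{s}_{i-1})_{k+1}+c^{(i)}_k$ for all $k\ge1$; $c^{(i)}_j$ is the number of throws at time $i$ to height $j$, and $T_{i,j}$ denotes ''a throw at time $i$ to height $j$''. For a set $\mathcal{T}$ of throws, $\mathrm{JS}_{\mathcal{T}}(\mathbf{a},\mathbf{b},n)$ is the set of juggling sequences in which $c^{(i)}_j>0$ only if $T_{i,j}\in\mathcal{T}$, and $\mathsf{js}_{\mathcal{T}}$ its cardinality. $\Phi^+_{A_r}=\{\varepsilon_i-\varepsilon_j:1\le i<j\le r+1\}\subset\mathbb{R}^{r+1}$; for $\Lambda\subseteq\Phi^+_{A_r}$, $P_\Lambda(\mu)$ is the set of finite multisets of elements of $\Lambda$ summing to $\mu$ and $K_\Lambda(\mu)=|P_\Lambda(\mu)|$. *)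

(* Defs.v *)
From HB Require Import structures.
From mathcomp Require Import all_boot all_order all_algebra.
Set Implicit Arguments.
Unset Strict Implicit.
Unset Printing Implicit Defensive.
Import Order.TTheory GRing.Theory Num.Theory.
Local Open Scope ring_scope.

(* A juggling state is stored as the sequence [s_1; s_2; ...] of its entries
   (heights 1,2,...), in canonical form: no trailing zeros. *)
Definition jstate := seq int.

Definition height (s : jstate) (k : nat) : int := nth 0 s k.-1.

Definition canon (s : jstate) : bool := last 1 s != 0.

Definition same_state (s t : jstate) : Prop :=
  forall k : nat, (0 < k)%N -> height s k = height t k.

Definition throws := nat -> nat -> bool.

Definition throw_step (T : throws) (i : nat) (s s' : jstate) : Prop :=
  exists (c : nat -> nat) (N : nat),
    (forall k, (N < k)%N -> c k = 0%N) /\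
    \sum_(1 <= k < N.+1) (c k)%:Z = height s 1 /\
    (forall k, (0 < k)%N -> height s' k = height s k.+1 + (c k)%:Z) /\
    (forall k, (0 < k)%N -> (0 < c k)%N -> T i k).

Definition JS (T : throws) (a b : jstate) (n : nat) (ss : seq jstate) : Prop :=
  size ss = n.+1 /\
  all canon ss /\
  same_state (nth [::] ss 0) a /\
  same_state (nth [::] ss n) b /\
  (forall i, (1 <= i <= n)%N -> throw_step T i (nth [::] ss i.-1) (nth [::] ss i)).

(* Coordinates of R^{r+1} are indexed by 'I_r.+1 (ordinal k stands for
   epsilon_{k+1}).  The pair p = (i, j) with i < j stands for the positive
   root epsilon_{i+1} - epsilon_{j+1}. *)
Definition posroots (r : nat) : {set 'I_r.+1 * 'I_r.+1} :=
  [set p : 'I_r.+1 * 'I_r.+1 | (p.1 < p.2)%N].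

Definition root_vec (r : nat) (p : 'I_r.+1 * 'I_r.+1) (k : 'I_r.+1) : int :=
  (k == p.1)%:Z - (k == p.2)%:Z.

Definition multiset (r : nat) := {ffun 'I_r.+1 * 'I_r.+1 -> nat}.

Definition P_Lambda (r : nat) (Lam : {set 'I_r.+1 * 'I_r.+1})
    (mu : 'I_r.+1 -> int) (m : multiset r) : Prop :=
  (forall p, (0 < m p)%N -> p \in Lam) /\
  (forall k : 'I_r.+1, \sum_(p : 'I_r.+1 * 'I_r.+1) (m p)%:Z * root_vec p k = mu k).

Definition Gamma (r : nat) (Lam : {set 'I_r.+1 * 'I_r.+1}) : throws :=
  fun i j => [&& (0 < i)%N, (0 < j)%N &
              [exists p in Lam, ((p.1 : nat) == i.-1) && ((p.2 : nat) == (i + j).-1)]].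

(* The map: juggling sequence |-> multiset of roots eps_i - eps_{i+j}, with
   multiplicity c^{(i)}_j = (s_i)_j - (s_{i-1})_{j+1}, the number of throws at
   time i to height j. *)
Definition js_to_multiset (r : nat) (ss : seq jstate) : multiset r :=
  [ffun p : 'I_r.+1 * 'I_r.+1 =>
     if (p.1 < p.2)%N then
       let i := (p.1 : nat).+1 in
       let j := ((p.2 : nat) - p.1)%N in
       `| height (nth [::] ss i) j - height (nth [::] ss i.-1) j.+1 |%N
     else 0%N].

Definition has_card (T : eqType) (P : T -> Prop) (k : nat) : Prop :=
  exists l : seq T, [/\ uniq l, size l = k & forall x, P x <-> x \in l].

Definition start_state (r : nat) (mu : 'I_r.+1 -> int) : jstate :=
  [seq mu (inord i) | i <- iota 0 r].
Definition end_state (r : nat) (mu : 'I_r.+1 -> int) : jstate :=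
  [:: \sum_(i < r.+1 | (i < r)%N) mu i].

(* Main.v *)
Require Import Defs.
From HB Require Import structures.
From mathcomp Require Import all_boot all_order all_algebra zify.
Import Order.TTheory GRing.Theory Num.Theory.
Local Open Scope ring_scope.
Set Implicit Arguments.
Unset Strict Implicit.

Lemma canon_eq (s t : jstate) : canon s -> canon t -> same_state s t -> s = t.
Proof.
move=> cs ct eq.
have E : forall i, nth 0 s i = nth 0 t i by move=> i; have := eq i.+1 isT.
have Hsz : forall (u v : jstate), canon u -> (forall i, nth 0 u i = nth 0 v i) -> (size u <= size v)%N.
  move=> u v cu Euv; rewrite leqNgt; apply/negP=> lt.
  have : nth 0 u (size u).-1 != 0.
    case: u cu lt Euv => [|x u] //= cu _ _.
    by rewrite /canon /= in cu; rewrite -(last_nth 0) /=.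
  by rewrite Euv nth_default ?eqxx //; move: lt; case: (size u) => //= n; lia.
apply: (eq_from_nth (x0:=0)).
  by apply/eqP; rewrite eqn_leq !Hsz.
by move=> i _; apply: E.
Qed.

Fixpoint strip (s : seq int) : seq int :=
  match s with
  | [::] => [::]
  | x :: s' => let t := strip s' in if (t == [::]) && (x == 0) then [::] else x :: t
  end.

Lemma nth_strip s k : nth 0 (strip s) k = nth 0 s k.
Proof.
elim: s k => [|x s IH] k //=.
case: ifP => [/andP[/eqP t0 /eqP ->]|_].
  case: k => [|k] //=; by rewrite -IH t0 nth_nil.
by case: k.
Qed.

Lemma canon_strip s : canon (strip s).
Proof.
rewrite /canon; elim: s => [|x s IH] //=.
case: ifP => // /negbT; rewrite negb_and; case E: (strip s) => [|y t] /=.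
  by [].
by move: IH; rewrite E.
Qed.

Definition mkstate (f : nat -> int) (n : nat) : jstate := strip (mkseq (fun i => f i.+1) n).

Lemma height_mkstate f n k : (0 < k)%N -> height (mkstate f n) k = if (k <= n)%N then f k else 0.
Proof.
move=> k0; rewrite /height /mkstate nth_strip.
case: ifP => h.
  by rewrite nth_mkseq ?prednK //; lia.
by rewrite nth_default // size_mkseq; lia.
Qed.

Lemma canon_mkstate f n : canon (mkstate f n).
Proof. exact: canon_strip. Qed.

Lemma sum_ext (F : nat -> int) m n1 n2 : (m <= n1 <= n2)%N ->
  (forall k, (n1 <= k < n2)%N -> F k = 0) ->
  \sum_(m <= k < n2) F k = \sum_(m <= k < n1) F k.
Proof.
move=> /andP[h1 h2] hz; rewrite (@big_cat_nat _ _ _ n1 m n2) //=.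
have -> : \sum_(n1 <= k < n2) F k = 0.
  by rewrite big_nat_cond big1 // => k /andP[hk _]; apply: hz.
by rewrite addr0.
Qed.

Lemma sum_if_gt (G : nat -> int) k n : (k < n)%N ->
  \sum_(0 <= b < n) (if (k < b)%N then G b else 0) = \sum_(k.+1 <= b < n) G b.
Proof.
move=> kn; rewrite (@big_cat_nat _ _ _ k.+1 0 n) //=.
have -> : \sum_(0 <= b < k.+1) (if (k < b)%N then G b else 0) = 0.
  by rewrite big_nat_cond big1 // => b /andP[/andP[_ hb] _]; rewrite ltnNge -ltnS hb.
by rewrite add0r; apply: eq_big_nat => b /andP[hb _]; rewrite hb.
Qed.

Lemma sum_if_lt (G : nat -> int) k n : (k <= n)%N ->
  \sum_(0 <= a < n) (if (a < k)%N then G a else 0) = \sum_(0 <= a < k) G a.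
Proof.
move=> kn; rewrite (@big_cat_nat _ _ _ k 0 n) //=.
have -> : \sum_(k <= b < n) (if (b < k)%N then G b else 0) = 0.
  by rewrite big_nat_cond big1 // => b /andP[/andP[hb _] _]; rewrite ltnNge hb.
by rewrite addr0; apply: eq_big_nat => b /andP[_ hb]; rewrite hb.
Qed.

Lemma sum1 n (G : 'I_n -> int) k : (forall a, a != k -> G a = 0) -> \sum_a G a = G k.
Proof.
move=> h; rewrite (bigD1 k) //=.
have -> : \sum_(i < n | i != k) G i = 0 by apply: big1.
by rewrite addr0.
Qed.

Lemma kostant_sum r (m : multiset r) (k : 'I_r.+1) :
  \sum_p (m p)%:Z * root_vec p k =
  \sum_(b < r.+1) (m (k, b))%:Z - \sum_(a < r.+1) (m (a, k))%:Z.
Proof.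
rewrite /root_vec.
under eq_bigr do rewrite mulrBr.
have pb (F : 'I_r.+1 * 'I_r.+1 -> int) : \sum_p F p = \sum_(a < r.+1) \sum_(b < r.+1) F (a, b).
  by rewrite pair_big /=; apply: eq_bigr => -[a b].
rewrite sumrB !pb /=.
congr (_ - _).
  rewrite (@sum1 _ _ k) => [|a /negbTE ak]; last by apply: big1 => b _; rewrite eq_sym ak mulr0.
  by apply: eq_bigr => b _; rewrite eqxx mulr1.
rewrite exchange_big (@sum1 _ _ k) => [|a /negbTE ak]; last by apply: big1 => b _; rewrite eq_sym ak mulr0.
by apply: eq_bigr => b _; rewrite eqxx mulr1.
Qed.

Section Main.
Variables (r : nat) (mu : 'I_r.+1 -> int) (Lam : {set 'I_r.+1 * 'I_r.+1}).
Hypothesis hr : (1 <= r)%N.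
Hypothesis hmu : \sum_(i < r.+1) mu i = 0.
Hypothesis hLam : Lam \subset posroots r.

Definition w0 (q : nat) : int := if (q < r)%N then mu (inord q) else 0.

Lemma height_start k : (0 < k)%N -> height (start_state mu) k = w0 k.-1.
Proof.
move=> k0; rewrite /height /start_state /w0.
case: ifP => h.
  by rewrite (nth_map 0%N) ?size_iota // nth_iota.
by rewrite nth_default // size_map size_iota leqNgt h.
Qed.

Lemma sum_lt_r : \sum_(i < r.+1 | (i < r)%N) mu i = - mu (inord r).
Proof.
have := hmu; rewrite (bigD1 (inord r)) //= => /eqP; rewrite addrC addr_eq0 => /eqP <-.
apply: eq_bigl => i.
by rewrite -val_eqE /= inordK // ltn_neqAle -ltnS ltn_ord andbT.
Qed.

Lemma height_end k : (0 < k)%N -> height (end_state mu) k = if k == 1%N then - mu (inord r) else 0.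
Proof.
move=> k0; rewrite /height /end_state; case: k k0 => [|[|k]] //= _.
  by rewrite sum_lt_r.
by rewrite nth_nil.
Qed.

Section Forward.
Variable ss : seq jstate.
Hypothesis Hss : JS (Gamma Lam) (start_state mu) (end_state mu) r ss.

Let S i := nth [::] ss i.
Definition Mf (a b : nat) : int := height (S a.+1) (b - a) - height (S a) (b - a).+1.

Lemma Mf_step a : (a < r)%N -> exists (c : nat -> nat) (N : nat),
    (forall k, (N < k)%N -> c k = 0%N) /\
    \sum_(1 <= k < N.+1) (c k)%:Z = height (S a) 1 /\
    (forall k, (0 < k)%N -> Mf a (a + k) = (c k)%:Z) /\
    (forall k, (0 < k)%N -> (0 < c k)%N -> Gamma Lam a.+1 k).
Proof.
move=> ar; case: Hss => _ [_ [_ [_ H]]].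
have := H a.+1; rewrite /= ar => /(_ isT) [c [N [h1 [h2 [h3 h4]]]]].
exists c, N; split => //; split => //; split => // k k0.
by rewrite /Mf addnC addnK h3 // addrAC subrr add0r.
Qed.

Lemma Mf_ge0 a b : (a < r)%N -> (a < b)%N -> 0 <= Mf a b.
Proof.
move=> ar ab; have [c [N [_ [_ [h3 _]]]]] := Mf_step ar.
have e : (a + (b - a))%N = b by lia.
by rewrite -e h3 ?subn_gt0 //.
Qed.

Lemma Mf_nz a b : (a < r)%N -> (a < b)%N -> Mf a b != 0 ->
  (b <= r)%N /\ ((inord a, inord b) : 'I_r.+1 * 'I_r.+1) \in Lam.
Proof.
move=> ar ab; have [c [N [_ [_ [h3 h4]]]]] := Mf_step ar.
have e : (a + (b - a))%N = b by lia.
rewrite -{1}e h3 ?subn_gt0 // => cnz.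
have := h4 (b - a)%N; rewrite subn_gt0 ab lt0n cnz => /(_ isT isT).
case/and3P => _ _ /existsP [[x y] /andP [pL /andP[/eqP /= ex /eqP /= ey]]].
have eb : (a.+1 + (b - a)).-1 = b by lia.

rewrite e in ey; split; first by rewrite -ey -ltnS ltn_ord.
suff -> : ((inord a, inord b) : 'I_r.+1 * 'I_r.+1) = (x, y) by [].
by rewrite -[x]inord_val -[y]inord_val ex ey.
Qed.

Lemma Mf_sum a : (a < r)%N -> \sum_(a.+1 <= b < r.+1) Mf a b = height (S a) 1.
Proof.
move=> ar; have [c [N [h1 [h2 [h3 h4]]]]] := Mf_step ar.
rewrite -h2.
have cz : forall k, (r - a < k)%N -> c k = 0%N.
  move=> k hk; apply/eqP; apply: contraT; rewrite -lt0n => ck.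
  have k0 : (0 < k)%N by lia.
  have akb : (a < a + k)%N by lia.
  have := @Mf_nz a (a + k) ar akb; rewrite h3 // eqz_nat -lt0n ck => /(_ isT) [hle _]; lia.
have E1 : \sum_(1 <= k < (N + r).+1) (c k)%:Z = \sum_(1 <= k < N.+1) (c k)%:Z.
  apply: sum_ext; first by lia.
  by move=> k /andP[hk _]; rewrite h1.
have E2 : \sum_(1 <= k < (N + r).+1) (c k)%:Z = \sum_(1 <= k < (r - a).+1) (c k)%:Z.
  apply: sum_ext; first by lia.
  by move=> k /andP[hk _]; rewrite cz.
rewrite -E1 E2 -{1}[a.+1]add1n big_addn.
have -> : (r.+1 - a = (r - a).+1)%N by lia.
by apply: eq_big_nat => k /andP[k1 _]; rewrite addnC h3.
Qed.
Lemma Mf_state i q : (i <= r)%N -> (i <= q)%N ->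
  height (S i) (q.+1 - i) = w0 q + \sum_(0 <= a < i) Mf a q.
Proof.
elim: i => [|i IH] ir iq.
  rewrite big_geq // addr0 subn0; case: Hss => _ [_ [h0 _]].
  by rewrite /S h0 // height_start.
rewrite big_nat_recr //= addrA -IH; try lia.
rewrite /Mf subSS subSn; last by lia.
by rewrite addrC subrK.
Qed.

Lemma jsm_val (x y : 'I_r.+1) :
  ((js_to_multiset r ss) (x, y))%:Z = if (x < y)%N then Mf x y else 0.
Proof.
rewrite ffunE /=; case: ifP => // xy.
rewrite gez0_abs //; apply: (@Mf_ge0 x y) => //.
by apply: leq_trans xy _; rewrite -ltnS.
Qed.

Lemma ordsum (G : nat -> int) : \sum_(b < r.+1) G b = \sum_(0 <= b < r.+1) G b.
Proof. by rewrite big_mkord. Qed.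

Lemma fwd_P : P_Lambda Lam mu (js_to_multiset r ss).
Proof.
split.
  move=> [x y] /=; rewrite ffunE /=; case: ifP => // xy; rewrite lt0n absz_eq0 => nz.
  have xr : (x < r)%N by apply: leq_trans xy _; rewrite -ltnS.
  by have [_] := Mf_nz xr xy nz; rewrite !inord_val.
move=> k; rewrite kostant_sum.
under eq_bigr do rewrite jsm_val.
under [X in _ - X]eq_bigr do rewrite jsm_val.
rewrite (ordsum (fun b => if (k < b)%N then Mf k b else 0)).
rewrite (ordsum (fun a => if (a < k)%N then Mf a k else 0)).
rewrite sum_if_gt // sum_if_lt; last by apply: ltnW.
have kr : (k <= r)%N by rewrite -ltnS.
case: (ltnP k r) => kr'.
  rewrite Mf_sum // -(subSnn k) Mf_state // addrK /w0 kr' inord_val //.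
have ekr : nat_of_ord k = r by apply/eqP; rewrite eqn_leq kr kr'.
rewrite big_geq; last by rewrite ekr.
have := Mf_state (leqnn r) (leqnn r); rewrite subSnn /w0 ltnn add0r.
case: Hss => _ [_ [_ [he _]]]; rewrite /S he // height_end // => E.
rewrite /= in E; rewrite ekr -E sub0r opprK; congr mu; apply: val_inj; rewrite /= inordK ?ekr //.
Qed.
End Forward.

Definition JSr := JS (Gamma Lam) (start_state mu) (end_state mu) r.

Lemma Mf_zero ss (H : JSr ss) a b : (a < r)%N -> (a < b)%N -> (r < b)%N -> Mf ss a b = 0.
Proof.
move=> ar ab rb; apply/eqP; apply: contraT => nz.
by have [hb _] := Mf_nz H ar ab nz; move: rb; rewrite ltnNge hb.
Qed.

Lemma fwd_inj ss1 ss2 : JSr ss1 -> JSr ss2 ->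
  js_to_multiset r ss1 = js_to_multiset r ss2 -> ss1 = ss2.
Proof.
move=> H1 H2 E.
have EM : forall a b, (a < r)%N -> (a < b)%N -> Mf ss1 a b = Mf ss2 a b.
  move=> a b ar ab; case: (leqP b r) => br; last by rewrite !Mf_zero.
  have := congr1 (fun m : multiset r => (m (inord a, inord b))%:Z) E.
  rewrite /= (jsm_val H1) (jsm_val H2) !inordK //; last by apply: leq_trans ar _.
  by rewrite ab.
case: (H1) => s1 [c1 _]; case: (H2) => s2 [c2 _].
apply: (eq_from_nth (x0:=[::])); first by rewrite s1 s2.
move=> i; rewrite s1 ltnS => ir.
apply: canon_eq.
- by apply: (allP c1); apply: mem_nth; rewrite s1 ltnS.
- by apply: (allP c2); apply: mem_nth; rewrite s2 ltnS.
move=> k k0.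
have e : ((k + i).-1.+1 - i)%N = k by lia.
have := Mf_state H1 ir (_ : (i <= (k + i).-1)%N); rewrite e => -> ; last by lia.
have := Mf_state H2 ir (_ : (i <= (k + i).-1)%N); rewrite e => -> ; last by lia.
congr (_ + _); apply: eq_big_nat => a /andP[_ ai]; apply: EM; lia.
Qed.

Section Backward.
Variable m : multiset r.
Hypothesis Hm : P_Lambda Lam mu m.

Definition Mm (a b : nat) : int :=
  if (a < b)%N && (b <= r)%N then (m (inord a, inord b))%:Z else 0.
Definition wv i q := w0 q + \sum_(0 <= a < i) Mm a q.
Definition st i := mkstate (fun k => wv i (k + i).-1) r.+1.
Definition build := mkseq st r.+1.
Arguments build : simpl never.

Lemma m_pos p : (0 < m p)%N -> (p.1 < p.2)%N.
Proof.
move=> /(proj1 Hm) pL; have := subsetP hLam p pL.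
by rewrite inE.
Qed.

Lemma m_val (x y : 'I_r.+1) : (m (x, y))%:Z = Mm x y.
Proof.
rewrite /Mm; case: ifP => [/andP[xy _]|]; first by rewrite !inord_val.
have yr : (y <= r)%N by rewrite -ltnS ltn_ord.
rewrite yr andbT => xy.
case E: (m (x, y)) => [|n] //.
by have := @m_pos (x, y); rewrite E /= xy => /(_ isT).
Qed.

Lemma Mm_ge0 a b : 0 <= Mm a b.
Proof. by rewrite /Mm; case: ifP. Qed.

Lemma wv_big i q : (r < q)%N -> wv i q = 0.
Proof.
move=> rq; rewrite /wv /w0; have -> : (q < r)%N = false by lia.
rewrite add0r big1 // => a _.
by rewrite /Mm; case: ifP => //; lia.
Qed.

Lemma height_st i k : (0 < k)%N -> height (st i) k = wv i (k + i).-1.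
Proof.
move=> k0; rewrite /st height_mkstate //; case: ifP => // kr.
by rewrite wv_big //; lia.
Qed.

Lemma st_step a k : (0 < k)%N ->
  height (st a.+1) k - height (st a) k.+1 = Mm a (a + k).
Proof.
move=> k0; rewrite !height_st //.
have -> : ((k + a.+1).-1 = a + k)%N by lia.
have -> : ((k.+1 + a).-1 = a + k)%N by lia.
by rewrite /wv big_nat_recr //= addrA addrC addrK.
Qed.

Lemma kost k : (k <= r)%N ->
  \sum_(0 <= b < r.+1) Mm k b - \sum_(0 <= a < k) Mm a k = mu (inord k).
Proof.
move=> kr; have := proj2 Hm (inord k); rewrite kostant_sum => <-.
have ek : nat_of_ord (inord k : 'I_r.+1) = k by rewrite inordK.
congr (_ - _).
  rewrite -(ordsum (fun b => Mm k b)); apply: eq_bigr => b _.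
  by rewrite m_val ek.
rewrite -(@sum_ext (fun a => Mm a k) 0 k r.+1); last first.
  by move=> a /andP[ka _]; rewrite /Mm ltnNge ka.
  by lia.
rewrite -(ordsum (fun a => Mm a k)); apply: eq_bigr => b _.
by rewrite m_val ek.
Qed.

Lemma out_sum a : (a < r)%N ->
  \sum_(1 <= j < r.+1) Mm a (a + j) = \sum_(0 <= b < r.+1) Mm a b.
Proof.
move=> ar.
rewrite (@big_cat_nat _ _ _ a.+1 0 r.+1) //=; last by apply: ltnW.
have -> : \sum_(0 <= b < a.+1) Mm a b = 0.
  by rewrite big_nat_cond big1 // => b /andP[/andP[_ hb] _]; rewrite /Mm ltnNge -ltnS hb.
rewrite add0r -{1}[a.+1]add1n big_addn.
have -> : (r.+1 - a = (r - a).+1)%N by lia.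
rewrite (@sum_ext (fun j => Mm a (a + j)) 1 (r - a).+1 r.+1); last first.
  by move=> j /andP[hj _]; rewrite /Mm; case: ifP => //; lia.
  by lia.
by apply: eq_big_nat => j _; rewrite addnC.
Qed.

Lemma nth_build i : (i < r.+1)%N -> nth [::] build i = st i.
Proof. by move=> ir; rewrite /build nth_mkseq. Qed.

Lemma build_JS : JSr build.
Proof.
split; first by rewrite size_mkseq.
split.
  by rewrite /build /mkseq; apply/allP => x /mapP [i _ ->]; apply: canon_mkstate.
split.
  move=> k k0; rewrite nth_build // height_st // height_start // /wv big_geq // addr0.
  by rewrite addn0.
split.
  move=> k k0; rewrite nth_build // height_st // height_end //.
  case: eqP => [-> | k1].
    rewrite /= /wv /w0 ltnn add0r.
    have := kost (leqnn r).
    have -> : \sum_(0 <= b < r.+1) Mm r b = 0.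
      by rewrite big1 // => b _; rewrite /Mm; case: ifP => //; lia.
    by rewrite sub0r => <-; rewrite opprK.
  by rewrite wv_big //; lia.
move=> i /andP[i1 ir].
have ei : i = (i.-1).+1 by lia.
have ar : (i.-1 < r)%N by lia.
move: ir i1; rewrite ei => ir _.
set a := i.-1 in ar ir *.
rewrite [a.+1.-1]/=.
exists (fun k => `|Mm a (a + k)|%N), r.
split.
  by move=> k rk; rewrite /Mm; case: ifP => //; lia.
split.
  rewrite big_nat_cond (eq_bigr (fun k => Mm a (a + k))); last first.
    by move=> k _; rewrite gez0_abs // Mm_ge0.
  rewrite -big_nat_cond out_sum //.
  rewrite nth_build; last by lia.
  rewrite height_st // add1n /= /wv /w0 ar -(kost (ltnW ar)) subrK //.
split.
  move=> k k0; rewrite !nth_build; try lia.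
  by rewrite gez0_abs ?Mm_ge0 // -(st_step a k0) [RHS]addrC subrK.
move=> k k0; rewrite lt0n absz_eq0 /Mm; case: ifP => [/andP [h1 h2]|]; last by rewrite eqxx.
rewrite eqz_nat -lt0n => /(proj1 Hm) pL.
apply/and3P; split => //; apply/existsP; exists (inord a, inord (a + k)).
by rewrite pL /= !inordK //; lia.
Qed.

Lemma build_map : js_to_multiset r build = m.
Proof.
apply/ffunP => -[x y]; rewrite ffunE -[(x, y).1]/x -[(x, y).2]/y; case: ifP => xy.
  have yr : (y <= r)%N by rewrite -ltnS.
cbv zeta.   rewrite !nth_build; try lia.
  have e : (x + (y - x) = y)%N by lia.
  rewrite st_step ?subn_gt0 // e -[RHS](absz_nat (m (x, y))) m_val //.
case E: (m (x, y)) => [|n] //.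
by have := @m_pos (x, y); rewrite E /= xy => /(_ isT).
Qed.
End Backward.

Definition Bd : nat := `| (\sum_(k < r.+1) (k%:Z) * mu k)%R |%N.

Lemma bound m : P_Lambda Lam mu m -> forall p, (m p <= Bd)%N.
Proof.
move=> [Hpos Hsum] p0.
have key : \sum_(k < r.+1) (k%:Z) * mu k =
    \sum_p (m p)%:Z * ((p.1 : nat)%:Z - (p.2 : nat)%:Z).
  under eq_bigr do rewrite -Hsum mulr_sumr.
  rewrite exchange_big /=; apply: eq_bigr => p _.
  rewrite /root_vec.
  under eq_bigr do rewrite mulrCA.
  rewrite -mulr_sumr; congr (_ * _).
  under eq_bigr do rewrite mulrBr.
  rewrite sumrB.
  rewrite (@sum1 _ _ p.1) => [|k /negbTE ->]; last by rewrite mulr0.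
  rewrite (@sum1 _ _ p.2) => [|k /negbTE ->]; last by rewrite mulr0.
  by rewrite !eqxx !mulr1.
have tp : forall p, (0 < m p)%N -> (p.1 < p.2)%N.
  by move=> p /Hpos pL; have := subsetP hLam p pL; rewrite inE.
have tle : forall p, (m p)%:Z * ((p.1 : nat)%:Z - (p.2 : nat)%:Z) <= - (m p)%:Z.
  move=> p; case E: (m p) => [|n]; first by rewrite mul0r oppr0.
  have := tp p; rewrite E => /(_ isT) lt; nia.
have h : (m p0)%:Z <= - \sum_(k < r.+1) (k%:Z) * mu k.
  rewrite key (bigD1 p0) //= opprD.
  have : \sum_(p | p != p0) (m p)%:Z * ((p.1 : nat)%:Z - (p.2 : nat)%:Z) <= 0.
    apply: sumr_le0 => p _; apply: le_trans (tle p) _; rewrite oppr_le0 //.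
  have := tle p0; move=> h1 h2; rewrite -[X in X <= _]addr0; apply: lerD; last by rewrite oppr_ge0.
  by rewrite lerNr.
rewrite /Bd; lia.
Qed.

Definition Pb (m : multiset r) : bool :=
  [forall p, (0 < m p)%N ==> (p \in Lam)] &&
  [forall k, \sum_p (m p)%:Z * root_vec p k == mu k].

Lemma PbP m : reflect (P_Lambda Lam mu m) (Pb m).
Proof.
apply: (iffP andP) => [[/forallP h1 /forallP h2]|[h1 h2]]; split.
- by move=> p hp; exact: (implyP (h1 p) hp).
- by move=> k; exact/eqP/(h2 k).
- by apply/forallP => p; apply/implyP; exact: h1.
- by apply/forallP => k; apply/eqP; exact: h2.
Qed.

Definition conv (f : {ffun 'I_r.+1 * 'I_r.+1 -> 'I_Bd.+1}) : multiset r :=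
  [ffun p => nat_of_ord (f p)].

Definition lP := [seq m <- map conv (enum {ffun 'I_r.+1 * 'I_r.+1 -> 'I_Bd.+1}) | Pb m].

Lemma lP_uniq : uniq lP.
Proof.
apply: filter_uniq; rewrite map_inj_uniq ?enum_uniq //.
move=> f g /ffunP E; apply/ffunP => p; apply: val_inj; have := E p; rewrite !ffunE.
by [].
Qed.

Lemma lP_mem m : P_Lambda Lam mu m <-> m \in lP.
Proof.
rewrite mem_filter; split.
  move=> H; rewrite (introT (PbP m) H) /=; apply/mapP.
  exists [ffun p => inord (m p)]; first by rewrite mem_enum.
  by apply/ffunP => p; rewrite !ffunE inordK // ltnS bound.
by move=> /andP[/PbP h _].
Qed.

Definition lJ := map build lP.

Lemma lJ_uniq : uniq lJ.
Proof.
rewrite map_inj_in_uniq ?lP_uniq // => m1 m2 /lP_mem H1 /lP_mem H2 E.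
by rewrite -(build_map H1) -(build_map H2) E.
Qed.

Lemma lJ_mem x : JSr x <-> x \in lJ.
Proof.
split.
  move=> H; have Pm := fwd_P H; apply/mapP; exists (js_to_multiset r x).
    by apply/lP_mem.
  by apply: (fwd_inj H (build_JS Pm)); rewrite build_map.
by case/mapP => m /lP_mem Pm ->; apply: build_JS.
Qed.
End Main.

Unset Implicit Arguments.
Theorem mainTheorem6 (r : nat) (hr : (1 <= r)%N) (mu : 'I_r.+1 -> int)
    (hmu : \sum_(i < r.+1) mu i = 0)
    (Lam : {set 'I_r.+1 * 'I_r.+1}) (hLam : Lam \subset posroots r) :
  let T := Gamma Lam in
  let JSset := JS T (start_state mu) (end_state mu) r in
  [/\ (forall ss, JSset ss -> P_Lambda Lam mu (js_to_multiset r ss)),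
      (forall ss1 ss2, JSset ss1 -> JSset ss2 ->
          js_to_multiset r ss1 = js_to_multiset r ss2 -> ss1 = ss2),
      (forall m, P_Lambda Lam mu m -> exists2 ss, JSset ss & js_to_multiset r ss = m)
    & exists k : nat, has_card (P_Lambda Lam mu) k /\ has_card JSset k].
Proof.
move=> T JSset; split.
- by move=> ss H; apply: (fwd_P hr hmu hLam H).
- by move=> ss1 ss2 H1 H2 E; apply: (fwd_inj hr hmu hLam H1 H2 E).
- move=> m Pm; exists (build mu m); first exact: (build_JS hr hmu hLam Pm).
  exact: (build_map hr hmu hLam Pm).
exists (size (lP mu Lam)); split.
  exists (lP mu Lam); split => //; first exact: lP_uniq.
  by move=> m; apply: (lP_mem hr hmu hLam).
exists (lJ mu Lam); split; first exact: (lJ_uniq hr hmu hLam).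
  by rewrite size_map.
by move=> x; apply: (lJ_mem hr hmu hLam).
Qed.
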